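(* Let $\beta$ be irrational with continued fraction denominators $(q'_n)_{n\ge1}$. Let $f:\mathbb{T}\to\mathbb{R}$ be real analytic and not a trigonometric polynomial, with Fourier coefficients $a_k$, and let $(l_k)_{k\ge1}$ be a strictly increasing sequence of positive integers with $a_{l_k}\neq0$ and $|a_{l_k}|/T_{l_k}\to\infty$, where $T_n=\sum_{j\ge2}|a_{jn}|\,|jn|$. For $k\ge1$ let $\eta(k)$ be the smallest integer with $q'_{\eta(k)}>2k^2/|a_{l_k}|^2$. For $n,m\ge1$ let $V_{n,m}=\{\alpha\in\mathbb{R}\setminus\mathbb{Q}: q_n(\alpha)=l_m \text{ and } q_{n+1}(\alpha)>2q'_{\eta(m)}n^2\}$, $\mathcal{U}_j=\bigcup_{n\ge1}V_{n,j}$, and $\mathcal{U}=\bigcap_{M\ge1}\bigcup_{j\ge M}\mathcal{U}_j$. Then $\mathcal{U}$ is a dense $G_\delta$ subset of $\mathbb{R}$.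
   Context: For an irrational $\gamma=[c_0;c_1,c_2,\dots]$, its continued fraction denominators are $q_0=1$, $q_1=c_1$, $q_n=c_nq_{n-1}+q_{n-2}$; $q_n(\gamma)$ denotes the $n$-th one. $\mathbb{T}=\mathbb{R}/\mathbb{Z}$. *)

(* Defs.v *)
From Stdlib Require Import Reals Lra ZArith.
From Coquelicot Require Import Coquelicot.
Open Scope R_scope.

Definition irrational (x : R) : Prop :=
  ~ exists (p q : Z), q <> 0%Z /\ x = IZR p / IZR q.

Fixpoint cf_x (x : R) (n : nat) : R :=
  match n with
  | O => x
  | S m => / (cf_x x m - IZR (Int_part (cf_x x m)))
  end.

Definition cf_c (x : R) (n : nat) : Z := Int_part (cf_x x n).

(* pair (q_n, q_{n+1}) with q_0 = 1, q_1 = c_1, q_n = c_n q_{n-1} + q_{n-2} *)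
Fixpoint cf_qpair (x : R) (n : nat) : Z * Z :=
  match n with
  | O => (1%Z, cf_c x 1)
  | S m => let (a, b) := cf_qpair x m in (b, (cf_c x (S (S m)) * b + a)%Z)
  end.

Definition cf_q (x : R) (n : nat) : Z := fst (cf_qpair x n).

(* f : T -> R seen as a 1-periodic function on R *)
Definition periodic1 (f : R -> R) : Prop := forall x, f (x + 1) = f x.

Definition real_analytic (f : R -> R) : Prop :=
  forall x0, exists r : R, 0 < r /\ exists c : nat -> R,
    forall x, Rabs (x - x0) < r -> is_pseries c (x - x0) (f x).

Definition trig_poly (f : R -> R) : Prop :=
  exists (N : nat) (c d : nat -> R), forall x,
    f x = sum_f_R0 (fun k => c k * cos (2 * PI * INR k * x)
                            + d k * sin (2 * PI * INR k * x)) N.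

(* Fourier coefficient a_k = \int_0^1 f(x) e^{-2 pi i k x} dx *)
Definition fourier (f : R -> R) (k : Z) : C :=
  (RInt (fun x => f x * cos (2 * PI * IZR k * x)) 0 1,
   - RInt (fun x => f x * sin (2 * PI * IZR k * x)) 0 1).

Definition Tsum (f : R -> R) (n : nat) : R :=
  Series (fun j => Cmod (fourier f (Z.of_nat ((j + 2) * n)))
                   * INR ((j + 2) * n)).

Definition G_delta (U : R -> Prop) : Prop :=
  exists O : nat -> (R -> Prop), (forall i, open_set (O i)) /\
    forall x, U x <-> forall i, O i x.

Definition dense (U : R -> Prop) : Prop :=
  forall x eps, 0 < eps -> exists y, U y /\ Rabs (y - x) < eps.

(* Main.v *)
Require Import Defs.
From Stdlib Require Import Reals ZArith.
From Coquelicot Require Import Coquelicot.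
From Stdlib Require Import Lra Lia Psatz Znumtheory Classical IndefiniteDescription Factorial.
From Stdlib Require Cantor.
Open Scope R_scope.

Lemma Int_part_unique x m : IZR m <= x < IZR m + 1 -> Int_part x = m.
Proof.
  intros [H1 H2]. unfold Int_part.
  assert (up x = (m + 1)%Z) as E.
  { symmetry; apply tech_up; rewrite plus_IZR; simpl; lra. }
  rewrite E; lia.
Qed.

Lemma Int_part_spec x : IZR (Int_part x) <= x < IZR (Int_part x) + 1.
Proof. destruct (base_Int_part x); lra. Qed.

Definition rat (x : R) := exists p q, q <> 0%Z /\ x = IZR p / IZR q.

Lemma rat_int m : rat (IZR m).
Proof. exists m, 1%Z; split; [lia|]. simpl; field. Qed.

Lemma rat_inv x : rat x -> rat (/ x).
Proof.
  intros [p [q [Hq ->]]].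
  destruct (Z.eq_dec p 0) as [->|Hp].
  - exists 0%Z, 1%Z; split; [lia|]. unfold Rdiv. rewrite Rmult_0_l, Rinv_0. simpl; field.
  - exists q, p; split; auto. apply not_0_IZR in Hq. apply not_0_IZR in Hp. field; auto.
Qed.

Lemma rat_sub_int x m : rat x -> rat (x - IZR m).
Proof.
  intros [p [q [Hq ->]]]. exists (p - m * q)%Z, q; split; auto.
  rewrite minus_IZR, mult_IZR. apply not_0_IZR in Hq. field; auto.
Qed.

Lemma rat_add_int x m : rat x -> rat (x + IZR m).
Proof.
  intros H. replace (x + IZR m) with (x - IZR (- m)) by (rewrite opp_IZR; ring).
  now apply rat_sub_int.
Qed.

Lemma rat_cfx x k : rat x -> rat (cf_x x k).
Proof.
  intros H; induction k; simpl; auto.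
  apply rat_inv, rat_sub_int; auto.
Qed.

Lemma rat_cfx_back x k : rat (cf_x x (S k)) -> rat (cf_x x k).
Proof.
  simpl. set (t := cf_x x k). set (m := Int_part t). intros H.
  destruct (Req_dec (t - IZR m) 0) as [E|E].
  - replace t with (IZR m) by lra. apply rat_int.
  - apply rat_inv in H. rewrite Rinv_inv in H.
    replace t with (t - IZR m + IZR m) by ring. now apply rat_add_int.
Qed.

Lemma irr_cfx x k : irrational x -> irrational (cf_x x k).
Proof.
  intros H; induction k; simpl; auto.
  intros Hr. apply IHk. apply (rat_cfx_back x k Hr).
Qed.

Lemma irr_noint t : irrational t -> forall m, t <> IZR m.
Proof. intros H m E; apply H; subst; apply rat_int. Qed.

Lemma floor_loc t0 : (forall m, t0 <> IZR m) ->
  exists e, 0 < e /\ forall t, Rabs (t - t0) < e -> Int_part t = Int_part t0.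
Proof.
  intros Hn. destruct (Int_part_spec t0) as [H1 H2].
  set (m := Int_part t0) in *.
  assert (H1' : IZR m < t0) by (destruct H1; auto; exfalso; apply (Hn m); auto).
  exists (Rmin (t0 - IZR m) (IZR m + 1 - t0)); split.
  - apply Rmin_glb_lt; lra.
  - intros t Ht. apply Int_part_unique.
    apply Rabs_def2 in Ht. destruct Ht as [Ha Hb].
    pose proof (Rmin_l (t0 - IZR m) (IZR m + 1 - t0)).
    pose proof (Rmin_r (t0 - IZR m) (IZR m + 1 - t0)). lra.
Qed.

Lemma cont_cfx x : irrational x -> forall k, continuity_pt (fun y => cf_x y k) x.
Proof.
  intros Hx k; induction k.
  - simpl. apply continuity_pt_id.
  - pose proof (irr_cfx x k Hx) as Hi.
    destruct (floor_loc (cf_x x k) (irr_noint _ Hi)) as [e [He Hloc]].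
    set (m := Int_part (cf_x x k)) in *.
    destruct (IHk e He) as [d [Hd Hdd]].
    apply continuity_pt_locally_ext with
      (f := inv_fct (minus_fct (fun y => cf_x y k) (fct_cte (IZR m)))) (a := d); auto.
    + intros y Hy. unfold inv_fct, minus_fct, fct_cte. simpl.
      rewrite (Hloc (cf_x y k)); [reflexivity|].
      destruct (Req_dec y x) as [->|Hne].
      * rewrite Rminus_diag, Rabs_R0; auto.
      * apply (Hdd y). split; [split; [exact I| auto]| exact Hy].
    + apply continuity_pt_inv.
      * apply continuity_pt_minus; auto. apply continuity_pt_const. intros a b; reflexivity.
      * unfold minus_fct, fct_cte. intros E.
        apply (irr_noint _ Hi m). lra.
Qed.

Lemma cfc_loc x : irrational x -> forall k,
  exists d, 0 < d /\ forall y, Rabs (y - x) < d -> cf_c y k = cf_c x k.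
Proof.
  intros Hx k. pose proof (irr_cfx x k Hx) as Hi.
  destruct (floor_loc (cf_x x k) (irr_noint _ Hi)) as [e [He Hloc]].
  destruct (cont_cfx x Hx k e He) as [d [Hd Hdd]].
  exists d; split; auto. intros y Hy. unfold cf_c.
  destruct (Req_dec y x) as [->|Hne]; auto.
  apply Hloc. apply (Hdd y). split; [split; [exact I| auto]| exact Hy].
Qed.

Lemma cfc_locN x : irrational x -> forall N,
  exists d, 0 < d /\ forall y, Rabs (y - x) < d -> forall k, (k <= N)%nat -> cf_c y k = cf_c x k.
Proof.
  intros Hx N; induction N.
  - destruct (cfc_loc x Hx 0) as [d [Hd H]]. exists d; split; auto.
    intros y Hy k Hk. assert (k = 0%nat) by lia. subst; auto.
  - destruct IHN as [d1 [Hd1 H1]]. destruct (cfc_loc x Hx (S N)) as [d2 [Hd2 H2]].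
    exists (Rmin d1 d2); split; [apply Rmin_glb_lt; auto|].
    intros y Hy k Hk.
    pose proof (Rmin_l d1 d2). pose proof (Rmin_r d1 d2).
    destruct (Nat.eq_dec k (S N)) as [->|Hne].
    + apply H2; lra.
    + apply H1; [lra|lia].
Qed.

Lemma qpair_ext x y N : (forall k, (k <= S N)%nat -> cf_c x k = cf_c y k) ->
  cf_qpair x N = cf_qpair y N.
Proof.
  induction N; intros H; simpl.
  - rewrite H; auto.
  - rewrite IHN by (intros k Hk; apply H; lia).
    destruct (cf_qpair y N). rewrite H; auto.
Qed.


Fixpoint Phi (d : nat -> Z) (k : nat) (t : R) : R :=
  match k with O => t | S k => Phi d k (IZR (d k) + / t) end.

Lemma Phi_cf d k : (forall i, (1 <= i < k)%nat -> (1 <= d i)%Z) ->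
  forall t, (k = O \/ 1 < t) ->
  cf_x (Phi d k t) k = t /\ forall i, (i < k)%nat -> cf_c (Phi d k t) i = d i.
Proof.
  induction k; intros Hd t Ht.
  - split; auto. intros i Hi; lia.
  - assert (Ht1 : 1 < t) by (destruct Ht; [lia|auto]).
    set (s := IZR (d k) + / t).
    assert (Hit : 0 < / t < 1).
    { split; [apply Rinv_0_lt_compat; lra|]. rewrite <- Rinv_1. apply Rinv_lt_contravar; lra. }
    assert (Hs : k = O \/ 1 < s).
    { destruct k; [left; auto| right]. unfold s. assert (1 <= d (S k))%Z by (apply Hd; lia).
      apply IZR_le in H. lra. }
    destruct (IHk (fun i Hi => Hd i ltac:(lia)) s Hs) as [H1 H2].
    assert (Hip : Int_part s = d k) by (apply Int_part_unique; unfold s; lra).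
    simpl Phi. fold s. split.
    + simpl. rewrite H1, Hip. unfold s.
      replace (IZR (d k) + / t - IZR (d k)) with (/ t) by ring. apply Rinv_inv.
    + intros i Hi. destruct (Nat.eq_dec i k) as [->|Hne].
      * unfold cf_c. rewrite H1. auto.
      * apply H2; lia.
Qed.

Lemma Phi_cont d k : (forall i, (1 <= i < k)%nat -> (1 <= d i)%Z) ->
  forall t, (k = O \/ 0 < t) -> continuity_pt (Phi d k) t.
Proof.
  induction k; intros Hd t Ht.
  - simpl. apply continuity_pt_id.
  - assert (Ht1 : 0 < t) by (destruct Ht; [lia|auto]).
    set (s := IZR (d k) + / t).
    assert (Hit : 0 < / t) by (apply Rinv_0_lt_compat; lra).
    assert (Hs : k = O \/ 1 < s).
    { destruct k; [left; auto| right]. unfold s. assert (1 <= d (S k))%Z by (apply Hd; lia).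
      apply IZR_le in H. lra. }
    change (continuity_pt (comp (Phi d k) (plus_fct (fct_cte (IZR (d k))) (inv_fct id))) t).
    apply continuity_pt_comp.
    + apply continuity_pt_plus. apply continuity_pt_const; intros a b; reflexivity.
      apply continuity_pt_inv. apply continuity_pt_id. unfold id; lra.
    + apply IHk. intros i Hi; apply Hd; lia. destruct Hs; [left; auto | right; unfold plus_fct, fct_cte, inv_fct, id; fold s; lra].
Qed.

Fixpoint Ap (d : nat -> Z) (n : nat) : Z * Z :=
  match n with O => (1%Z, d O) | S m => let (a, b) := Ap d m in (b, (d (S m) * b + a)%Z) end.
Fixpoint Bq (d : nat -> Z) (n : nat) : Z * Z :=
  match n with O => (0%Z, 1%Z) | S m => let (a, b) := Bq d m in (b, (d (S m) * b + a)%Z) end.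

Lemma Bq_qpair x n : cf_qpair x n = Bq (cf_c x) (S n).
Proof.
  induction n.
  - simpl. f_equal. ring.
  - change (cf_qpair x (S n)) with (let (a, b) := cf_qpair x n in (b, (cf_c x (S (S n)) * b + a)%Z)).
    rewrite IHn. change (Bq (cf_c x) (S (S n))) with
      (let (a, b) := Bq (cf_c x) (S n) in (b, (cf_c x (S (S n)) * b + a)%Z)).
    destruct (Bq (cf_c x) (S n)); reflexivity.
Qed.

Lemma Bq_ext d e n : (forall i, (1 <= i <= n)%nat -> d i = e i) -> Bq d n = Bq e n.
Proof.
  induction n; intros H; simpl; auto.
  rewrite IHn by (intros i Hi; apply H; lia). destruct (Bq e n). rewrite H by lia. auto.
Qed.

Lemma Bq_pos d n : (forall i, (1 <= i <= n)%nat -> (1 <= d i)%Z) ->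
  (0 <= fst (Bq d n) /\ 1 <= snd (Bq d n))%Z.
Proof.
  induction n; intros H; simpl; [lia|].
  destruct IHn as [H1 H2]; [intros i Hi; apply H; lia|].
  destruct (Bq d n) as [a b]; simpl in *.
  assert (1 <= d (S n))%Z by (apply H; lia). nia.
Qed.

Lemma det_AB d n : let (a, b) := Ap d n in let (c, e) := Bq d n in
  (b * c - a * e = 1 \/ b * c - a * e = -1)%Z.
Proof.
  induction n; simpl; [lia|].
  destruct (Ap d n) as [a b]; destruct (Bq d n) as [c e]. lia.
Qed.

Lemma Phi_mob d n : (forall i, (1 <= i <= n)%nat -> (1 <= d i)%Z) ->
  forall t, 0 < t ->
  Phi d (S n) t = (IZR (snd (Ap d n)) * t + IZR (fst (Ap d n))) /
                  (IZR (snd (Bq d n)) * t + IZR (fst (Bq d n))).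
Proof.
  induction n; intros H t Ht.
  - simpl. field. lra.
  - change (Phi d (S (S n)) t) with (Phi d (S n) (IZR (d (S n)) + / t)).
    assert (Hd1 : (1 <= d (S n))%Z) by (apply H; lia).
    assert (Hp := Bq_pos d n). specialize (Hp ltac:(intros i Hi; apply H; lia)).
    assert (Hit : 0 < / t) by (apply Rinv_0_lt_compat; lra).
    rewrite IHn by (try (intros i Hi; apply H; lia); apply IZR_le in Hd1; lra).
    simpl. destruct (Ap d n) as [a b]; destruct (Bq d n) as [c e]; simpl in *.
    destruct Hp as [Hc He]. apply IZR_le in Hc, He, Hd1.
    rewrite !plus_IZR, !mult_IZR.
    assert (0 < IZR e * (IZR (d (S n)) + / t)) by (apply Rmult_lt_0_compat; lra).
    assert (0 < IZR e * (IZR (d (S n)) + / t) + IZR c) by lra.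
    assert (0 <= IZR (d (S n)) * IZR e) by (apply Rmult_le_pos; lra).
    assert (0 <= (IZR (d (S n)) * IZR e + IZR c) * t) by (apply Rmult_le_pos; lra).
    assert (0 < (IZR (d (S n)) * IZR e + IZR c) * t + IZR e) by lra.
    field. repeat split; lra.
Qed.

Lemma ident_q (P Q p q : Z) : rel_prime P Q -> rel_prime p q -> (0 < Q)%Z -> (0 < q)%Z ->
  (p * Q = P * q)%Z -> Q = q.
Proof.
  intros H1 H2 HQ Hq E.
  assert (A : (q | Q)%Z).
  { apply Gauss with p. exists P. exact E. now apply rel_prime_sym. }
  assert (B : (Q | q)%Z).
  { apply Gauss with P. exists p. rewrite <- E; ring. now apply rel_prime_sym. }
  apply Z.divide_antisym_nonneg; auto; lia.
Qed.

Lemma AB_rel_prime d n : rel_prime (snd (Ap d n)) (snd (Bq d n)).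
Proof.
  pose proof (det_AB d n) as D. destruct (Ap d n) as [a b]; destruct (Bq d n) as [c e]; simpl.
  apply bezout_rel_prime. destruct D as [D|D].
  - apply (Bezout_intro _ _ _ c (- a)); lia.
  - apply (Bezout_intro _ _ _ (- c) a); lia.
Qed.


Lemma cfx_shift x k : cf_x x (S k) = cf_x (cf_x x 1) k.
Proof.
  induction k; auto.
  change (cf_x x (S (S k))) with (/ (cf_x x (S k) - IZR (Int_part (cf_x x (S k))))).
  rewrite IHk. reflexivity.
Qed.

Definition isint (t : R) := exists m, t = IZR m.

Lemma euclid_exists N : forall p q, (0 < q)%Z -> (Z.to_nat q <= N)%nat ->
  exists n, isint (cf_x (IZR p / IZR q) n).
Proof.
  induction N; intros p q Hq HN; [lia|].
  pose proof (Z_div_mod_eq_full p q) as E.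
  pose proof (Z.mod_pos_bound p q Hq) as B.
  set (s := (p mod q)%Z) in *. set (m := (p / q)%Z) in *.
  assert (Hq' : IZR q <> 0) by (apply not_0_IZR; lia).
  assert (Er : IZR p / IZR q = IZR m + IZR s / IZR q).
  { rewrite E at 1. rewrite plus_IZR, mult_IZR. field; auto. }
  destruct (Z.eq_dec s 0) as [Hs|Hs].
  - exists O. simpl. exists m. rewrite Er, Hs. unfold Rdiv; ring.
  - assert (Hsq : 0 < IZR s / IZR q < 1).
    { assert (0 < IZR s) by (apply IZR_lt; lia). assert (IZR s < IZR q) by (apply IZR_lt; lia).
      split. apply Rdiv_lt_0_compat; lra.
      apply (Rmult_lt_reg_r (IZR q)); [lra|]. unfold Rdiv; rewrite Rmult_assoc, Rinv_l; lra. }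
    assert (Hip : Int_part (IZR p / IZR q) = m) by (apply Int_part_unique; lra).
    assert (E1 : cf_x (IZR p / IZR q) 1 = IZR q / IZR s).
    { simpl. rewrite Hip. replace (IZR p / IZR q - IZR m) with (IZR s / IZR q) by lra.
      assert (IZR s <> 0) by (apply not_0_IZR; auto). field; auto. }
    destruct (IHN q s ltac:(lia) ltac:(lia)) as [n Hn].
    exists (S n). rewrite cfx_shift, E1. auto.
Qed.

Lemma least_nat (P : nat -> Prop) : (exists n, P n) -> exists n, P n /\ forall k, (k < n)%nat -> ~ P k.
Proof.
  intros [n Hn].
  assert (forall N n, (n <= N)%nat -> P n -> exists n, P n /\ forall k, (k < n)%nat -> ~ P k).
  { intros N; induction N as [|N IH]; intros n0 Hn0 HP.
    - exists n0; split; auto. intros k Hk; lia.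
    - destruct (classic (exists k, (k < n0)%nat /\ P k)) as [[k [Hk HPk]]|Hno].
      + apply (IH k); auto; lia.
      + exists n0; split; auto. intros k Hk HPk; apply Hno; eauto. }
  apply (H n n); auto.
Qed.

Lemma frac_inv_gt1 t : ~ isint t -> 1 < / (t - IZR (Int_part t)).
Proof.
  intros Hn. destruct (Int_part_spec t) as [H1 H2].
  assert (IZR (Int_part t) <> t) by (intros E; apply Hn; exists (Int_part t); auto).
  assert (0 < t - IZR (Int_part t) < 1) by (split; [destruct H1; lra|lra]).
  rewrite <- Rinv_1. apply Rinv_lt_contravar; lra.
Qed.

Lemma rat_digits p q : (2 <= q)%Z -> rel_prime p q ->
  exists n d, (1 <= n)%nat /\ (forall i, (1 <= i <= n)%nat -> (1 <= d i)%Z) /\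
    IZR p / IZR q = Phi d n (IZR (d n)) /\ snd (Bq d n) = q.
Proof.
  intros Hq Hpq. set (r := IZR p / IZR q).
  destruct (least_nat (fun n => isint (cf_x r n)))
    as [n [Hn Hlt]].
  { apply (euclid_exists (Z.to_nat q)); lia. }
  assert (Hq0 : IZR q <> 0) by (apply not_0_IZR; lia).
  assert (n1 : (1 <= n)%nat).
  { destruct n; [|lia]. exfalso. destruct Hn as [m Hm]. simpl in Hm. unfold r in Hm.
    assert (p = m * q)%Z.
    { apply eq_IZR. rewrite mult_IZR. rewrite <- Hm. field; auto. }
    destruct Hpq as [_ _ G]. assert (q | 1)%Z by (apply G; [exists m; auto| apply Z.divide_refl]).
    apply Z.divide_pos_le in H0; lia. }
  set (d := cf_c r).
  assert (Hgt : forall i, (1 <= i <= n)%nat -> 1 < cf_x r i).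
  { intros i Hi. destruct i; [lia|]. simpl. apply frac_inv_gt1. apply Hlt; lia. }
  assert (Hd : forall i, (1 <= i <= n)%nat -> (1 <= d i)%Z).
  { intros i Hi. specialize (Hgt i Hi). unfold d, cf_c.
    destruct (Int_part_spec (cf_x r i)) as [A B].
    assert (0 < IZR (Int_part (cf_x r i))) by lra. apply lt_IZR in H. lia. }
  assert (Hphi : forall k, (k <= n)%nat -> Phi d k (cf_x r k) = r).
  { induction k; intros Hk; auto.
    assert (E : IZR (d k) + / cf_x r (S k) = cf_x r k).
    { change (cf_x r (S k)) with (/ (cf_x r k - IZR (Int_part (cf_x r k)))).
      rewrite Rinv_inv. unfold d, cf_c. ring. }
    change (Phi d (S k) (cf_x r (S k))) with (Phi d k (IZR (d k) + / cf_x r (S k))). rewrite E. apply IHk; lia. }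
  assert (Hdn : cf_x r n = IZR (d n)).
  { destruct Hn as [m Hm]. unfold d, cf_c. rewrite Hm.
    f_equal. symmetry. apply Int_part_unique. lra. }
  exists n, d. split; auto. split; auto.
  assert (Er : r = Phi d n (IZR (d n))) by (rewrite <- Hdn; symmetry; apply Hphi; lia).
  split; auto.
  destruct n as [|m]; [lia|].
  assert (Hdm : (1 <= d (S m))%Z) by (apply Hd; lia).
  pose proof (Bq_pos d m ltac:(intros i Hi; apply Hd; lia)) as Hp.
  rewrite Phi_mob in Er by (try (intros i Hi; apply Hd; lia); apply IZR_lt; lia).
  pose proof (AB_rel_prime d (S m)) as HR.
  simpl in HR |- *.
  destruct (Ap d m) as [a b]; destruct (Bq d m) as [c e]; simpl in *.
  assert (HQ : (0 < d (S m) * e + c)%Z) by nia.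
  apply (ident_q (d (S m) * b + a) _ p q); auto; try lia.
  apply eq_IZR. rewrite !mult_IZR. unfold r in Er.
  rewrite !plus_IZR, !mult_IZR.
  assert (IZR (d (S m) * e + c) <> 0) by (apply not_0_IZR; lia).
  rewrite plus_IZR, mult_IZR in H.
  replace (IZR (d (S m)) * IZR b + IZR a) with (IZR b * IZR (d (S m)) + IZR a) by ring.
  replace (IZR (d (S m)) * IZR e + IZR c) with (IZR e * IZR (d (S m)) + IZR c) in H |- * by ring.
  apply (f_equal (fun z => z * IZR q * (IZR e * IZR (d (S m)) + IZR c))) in Er.
  field_simplify in Er; auto. lra.
Qed.


Lemma prime_div_exists : forall N n, (Z.to_nat n <= N)%nat -> (1 < n)%Z ->
  exists l, prime l /\ (l | n)%Z.
Proof.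
  induction N; intros n HN Hn; [lia|].
  destruct (prime_dec n) as [Hp|Hp].
  - exists n; split; auto. apply Z.divide_refl.
  - destruct (not_prime_divide n Hn Hp) as [m [Hm Hmn]].
    destruct (IHN m ltac:(lia) ltac:(lia)) as [l [Hl Hlm]].
    exists l; split; auto. eapply Z.divide_trans; eauto.
Qed.

Lemma rel_prime_of_primes p q : (0 < q)%Z ->
  (forall l, prime l -> (l | p)%Z -> (l | q)%Z -> False) -> rel_prime p q.
Proof.
  intros Hq H. apply Zgcd_1_rel_prime.
  pose proof (Z.gcd_nonneg p q) as Hg.
  assert (Z.gcd p q <> 0)%Z.
  { intros E. apply Z.gcd_eq_0 in E. lia. }
  destruct (Z.eq_dec (Z.gcd p q) 1) as [E|E]; auto.
  exfalso. destruct (prime_div_exists (Z.to_nat (Z.gcd p q)) (Z.gcd p q) ltac:(lia) ltac:(lia))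
    as [l [Hl Hlg]].
  apply (H l Hl).
  - eapply Z.divide_trans; eauto. apply Z.gcd_divide_l.
  - eapply Z.divide_trans; eauto. apply Z.gcd_divide_r.
Qed.

Lemma fact_div B : forall k, (1 <= k <= B)%nat -> (Z.of_nat k | Z.of_nat (fact B))%Z.
Proof.
  induction B; intros k Hk; [lia|].
  change (fact (S B)) with (S B * fact B)%nat. rewrite Nat2Z.inj_mul.
  destruct (Nat.eq_dec k (S B)) as [->|Hne].
  - apply Z.divide_mul_l, Z.divide_refl.
  - apply Z.divide_mul_r, IHB; lia.
Qed.

Lemma exists_cong (d : Z) (A : R) : (1 <= d)%Z ->
  exists p, (d | p - 1)%Z /\ A < IZR p <= A + IZR d.
Proof.
  intros Hd. set (m := Int_part A).
  destruct (base_Int_part A) as [H1 H2]. fold m in H1, H2.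
  pose proof (Z_div_mod_eq_full (- m) d) as E.
  pose proof (Z.mod_pos_bound (- m) d ltac:(lia)) as Bd.
  exists (m + 1 + (- m) mod d)%Z. split.
  - exists (- ((- m) / d))%Z. lia.
  - rewrite !plus_IZR. assert (0 <= IZR ((- m) mod d)) by (apply IZR_le; lia).
    assert (IZR ((- m) mod d) <= IZR d - 1).
    { replace (IZR d - 1) with (IZR (d - 1)) by (rewrite minus_IZR; auto). apply IZR_le; lia. }
    lra.
Qed.

Lemma divide_one_false l : prime l -> (l | 1)%Z -> False.
Proof.
  intros Hl H. apply prime_ge_2 in Hl. apply Z.divide_pos_le in H; lia.
Qed.

Lemma NT a b : a < b -> exists Q0 : nat, forall q : Z, (Z.of_nat Q0 <= q)%Z ->
  exists p, rel_prime p q /\ IZR q * a < IZR p < IZR q * b.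
Proof.
  intros Hab. set (L := b - a).
  assert (HL : 0 < L) by (unfold L; lra).
  destruct (archimed (2 / L)) as [HB _].
  set (B := Z.to_nat (up (2 / L))).
  assert (HBL : 2 < INR B * L).
  { assert (0 < 2 / L) by (apply Rdiv_lt_0_compat; lra).
    assert (0 < up (2 / L))%Z by (apply lt_IZR; lra).
    unfold B. rewrite INR_IZR_INZ, Z2Nat.id by lia.
    apply (Rmult_lt_compat_r L) in HB; auto. unfold Rdiv in HB.
    rewrite Rmult_assoc, Rinv_l in HB; lra. }
  set (D := Z.of_nat (fact B)).
  assert (HD : (1 <= D)%Z) by (unfold D; pose proof (lt_O_fact B); lia).
  destruct (archimed ((IZR D + 2) / L)) as [HQ _].
  exists (Z.to_nat (up ((IZR D + 2) / L))).
  intros q Hq.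
  assert (HDp : 0 < IZR D) by (apply IZR_lt; lia).
  assert (0 < up ((IZR D + 2) / L))%Z.
  { apply lt_IZR. assert (0 < (IZR D + 2) / L) by (apply Rdiv_lt_0_compat; lra). simpl; lra. }
  rewrite Z2Nat.id in Hq by lia.
  assert (HqL : IZR D + 2 < IZR q * L).
  { apply IZR_le in Hq. apply (Rmult_lt_compat_r L) in HQ; auto. unfold Rdiv in HQ.
    rewrite Rmult_assoc, Rinv_l in HQ by lra. nra. }
  assert (Hq0r : 0 < IZR q).
  { destruct (Rle_or_lt (IZR q) 0) as [H0|H0]; auto.
    assert (IZR q * L <= 0) by (apply Rmult_le_0_r; lra). lra. }
  assert (Hq0 : (0 < q)%Z) by (apply lt_IZR; exact Hq0r).
  destruct (classic (exists l, prime l /\ (Z.of_nat B <= l)%Z /\ (l | q)%Z))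
    as [[l [Hl [HlB [d0 Hd0]]]]|Hno].
  -
    pose proof (prime_ge_2 l Hl) as Hl2.
    assert (Hd0p : (1 <= d0)%Z) by nia.
    destruct (exists_cong d0 (IZR q * a) Hd0p) as [p0 [Hp0 Hb0]].
    assert (Hbig : 2 * IZR d0 < IZR q * L).
    { rewrite Hd0, mult_IZR. apply IZR_le in HlB. rewrite <- INR_IZR_INZ in HlB.
      assert (1 <= IZR d0) by (apply IZR_le; lia).
      assert (H2 : 2 < IZR l * L) by (apply Rmult_le_compat_r with (r := L) in HlB; lra).
      assert (2 * IZR d0 < IZR d0 * (IZR l * L)) by (apply Rmult_lt_compat_l with (r := IZR d0) in H2; lra).
      lra. }
    assert (Hlp : forall p, (d0 | p - 1)%Z -> forall l', prime l' -> (l' | p)%Z -> (l' | q)%Z ->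
                 (l | p)%Z).
    { intros p Hp l' Hl' Hl'p Hl'q. rewrite Hd0 in Hl'q.
      destruct (prime_mult l' Hl' _ _ Hl'q) as [Hx|Hx].
      - exfalso. apply (divide_one_false l' Hl').
        replace 1%Z with (p - (p - 1))%Z by ring. apply Z.divide_sub_r; auto.
        eapply Z.divide_trans; eauto.
      - apply prime_div_prime in Hx; auto. subst; auto. }
    destruct (classic (l | p0)%Z) as [Hlp0|Hlp0].
    + exists (p0 + d0)%Z. split.
      * apply rel_prime_of_primes; auto. intros l' Hl' H1 H2.
        assert (Hdp : (d0 | p0 + d0 - 1)%Z).
        { replace (p0 + d0 - 1)%Z with ((p0 - 1) + d0 * 1)%Z by ring.
          apply Z.divide_add_r; auto. apply Z.divide_mul_l, Z.divide_refl. }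
        pose proof (Hlp _ Hdp l' Hl' H1 H2) as Hll.
        assert (Hld : (l | d0)%Z).
        { replace d0 with ((p0 + d0) - p0)%Z by ring. apply Z.divide_sub_r; auto. }
        apply (divide_one_false l Hl).
        replace 1%Z with (p0 - (p0 - 1))%Z by ring. apply Z.divide_sub_r; auto.
        eapply Z.divide_trans; eauto.
      * rewrite plus_IZR. unfold L in Hbig. nra.
    + exists p0. split.
      * apply rel_prime_of_primes; auto. intros l' Hl' H1 H2.
        exact (Hlp0 (Hlp _ Hp0 l' Hl' H1 H2)).
      * unfold L in Hbig. assert (0 < IZR d0) by (apply IZR_lt; lia). nra.
  -
    destruct (exists_cong D (IZR q * a) HD) as [p [Hp Hb]].
    exists p. split.
    + apply rel_prime_of_primes; auto. intros l' Hl' H1 H2.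
      pose proof (prime_ge_2 l' Hl').
      assert (l' < Z.of_nat B)%Z.
      { destruct (Z_lt_le_dec l' (Z.of_nat B)); auto. exfalso; apply Hno; eauto. }
      assert (Hl'D : (l' | D)%Z).
      { unfold D. replace l' with (Z.of_nat (Z.to_nat l')) by lia. apply fact_div; lia. }
      apply (divide_one_false l' Hl').
      replace 1%Z with (p - (p - 1))%Z by ring. apply Z.divide_sub_r; auto.
      eapply Z.divide_trans; eauto.
    + unfold L in HqL. nra.
Qed.


Lemma even_of_sq p : Z.even (p * p) = true -> exists k, p = (2 * k)%Z.
Proof.
  intros H. rewrite Z.even_mul in H. apply Bool.orb_true_iff in H.
  assert (Z.even p = true) by (destruct H; auto).
  apply Z.even_spec in H0. destruct H0 as [k Hk]. exists k; auto.
Qed.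

Lemma no_sqrt2 N : forall p q, (Z.abs q <= Z.of_nat N)%Z -> q <> 0%Z -> (p * p <> 2 * q * q)%Z.
Proof.
  induction N; intros p q Hq Hq0 E; [lia|].
  destruct (even_of_sq p) as [p' Hp'].
  { rewrite E. rewrite <- Z.mul_assoc. apply Z.even_mul. }
  subst p.
  assert (E2 : (q * q = 2 * p' * p')%Z) by lia.
  destruct (even_of_sq q) as [q' Hq'].
  { rewrite E2. rewrite <- Z.mul_assoc. apply Z.even_mul. }
  subst q.
  apply (IHN p' q'); lia.
Qed.

Lemma sqrt2_irr : irrational (sqrt 2).
Proof.
  intros [p [q [Hq E]]].
  assert (Hq' : IZR q <> 0) by (apply not_0_IZR; auto).
  assert (E2 : IZR p * IZR p = 2 * IZR q * IZR q).
  { assert (sqrt 2 * sqrt 2 = 2) by (apply sqrt_sqrt; lra).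
    rewrite E in H. field_simplify in H; auto.
    apply (f_equal (fun x => x * IZR q ^ 2)) in H. field_simplify in H; auto. lra. }
  rewrite <- !mult_IZR in E2. apply eq_IZR in E2.
  apply (no_sqrt2 (Z.abs_nat q) p q); auto. lia.
Qed.

Lemma big_irr (T : R) : exists z, T < z /\ irrational z.
Proof.
  destruct (archimed T) as [H1 _].
  exists (IZR (up T) + sqrt 2). split.
  - pose proof (sqrt_lt_R0 2 ltac:(lra)). lra.
  - intros Hr. apply sqrt2_irr.
    replace (sqrt 2) with (IZR (up T) + sqrt 2 - IZR (up T)) by ring.
    apply rat_sub_int; auto.
Qed.

Lemma l_ge (l : nat -> nat) : (forall k, (1 <= k)%nat -> (0 < l k)%nat) ->
  (forall k, (1 <= k)%nat -> (l k < l (S k))%nat) -> forall k, (1 <= k)%nat -> (k <= l k)%nat.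
Proof.
  intros H0 H1 k Hk. induction k; [lia|].
  destruct (Nat.eq_dec k 0) as [->|Hne].
  - apply H0; lia.
  - specialize (IHk ltac:(lia)). specialize (H1 k ltac:(lia)). lia.
Qed.

Lemma Bq_S1 e m : fst (Bq e (S m)) = snd (Bq e m).
Proof. simpl. destruct (Bq e m); auto. Qed.
Lemma Bq_S2 e m : snd (Bq e (S m)) = (e (S m) * snd (Bq e m) + fst (Bq e m))%Z.
Proof. simpl. destruct (Bq e m); auto. Qed.

Lemma core (l : nat -> nat) (T : nat -> nat -> R) :
  (forall k, (1 <= k)%nat -> (0 < l k)%nat) ->
  (forall k, (1 <= k)%nat -> (l k < l (S k))%nat) ->
  forall a b (M : nat), a < b -> exists y, a < y < b /\ irrational y /\
    exists j, (M <= j)%nat /\ exists n, (1 <= n)%nat /\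
      cf_q y n = Z.of_nat (l j) /\ IZR (cf_q y (S n)) > T j n.
Proof.
  intros Hl0 Hl1 a b M Hab.
  destruct (NT a b Hab) as [Q0 HQ0].
  set (j := Nat.max (Nat.max M Q0) 2).
  pose proof (l_ge l Hl0 Hl1 j ltac:(unfold j; lia)) as Hlj.
  set (q := Z.of_nat (l j)).
  destruct (HQ0 q ltac:(unfold q, j in *; lia)) as [p [Hpq Hb]].
  assert (Hq2 : (2 <= q)%Z) by (unfold q, j in *; lia).
  assert (Hqr : 0 < IZR q) by (apply IZR_lt; lia).
  set (r := IZR p / IZR q).
  assert (Har : a < r < b).
  { unfold r. split.
    - apply (Rmult_lt_reg_r (IZR q)); auto. unfold Rdiv. rewrite Rmult_assoc, Rinv_l; lra.
    - apply (Rmult_lt_reg_r (IZR q)); auto. unfold Rdiv. rewrite Rmult_assoc, Rinv_l; lra. }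
  destruct (rat_digits p q Hq2 Hpq) as [n [d [Hn1 [Hd [Er HQ]]]]].
  fold r in Er.
  assert (Hdn : 1 <= IZR (d n)) by (apply IZR_le; apply Hd; lia).
  pose proof (Phi_cont d n ltac:(intros i Hi; apply Hd; lia) (IZR (d n)) ltac:(right; lra)) as Hc.
  set (eps := Rmin (r - a) (b - r)).
  assert (Heps : 0 < eps) by (apply Rmin_glb_lt; lra).
  destruct (Hc eps Heps) as [del [Hdel Hdd]].
  destruct (big_irr (Rmax (Rmax (T j n + 2) (/ del + 1)) 2)) as [z [Hz Hzi]].
  pose proof (Rmax_l (Rmax (T j n + 2) (/ del + 1)) 2).
  pose proof (Rmax_r (Rmax (T j n + 2) (/ del + 1)) 2).
  pose proof (Rmax_l (T j n + 2) (/ del + 1)).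
  pose proof (Rmax_r (T j n + 2) (/ del + 1)).
  assert (Hz1 : 1 < z) by lra.
  assert (Hiz : 0 < / z < del).
  { split; [apply Rinv_0_lt_compat; lra|].
    rewrite <- (Rinv_inv del). apply Rinv_lt_contravar.
    - apply Rmult_lt_0_compat; [apply Rinv_0_lt_compat|]; lra.
    - lra. }
  set (y := Phi d (S n) z).
  assert (Hy : Rabs (y - r) < eps).
  { unfold y. change (Phi d (S n) z) with (Phi d n (IZR (d n) + / z)).
    rewrite Er. apply (Hdd (IZR (d n) + / z)). split.
    - split; [exact I|]. lra.
    - simpl. unfold R_dist, Rdist. replace (IZR (d n) + / z - IZR (d n)) with (/ z) by ring.
      rewrite Rabs_right; lra. }
  pose proof (Rmin_l (r - a) (b - r)). pose proof (Rmin_r (r - a) (b - r)).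
  apply Rabs_def2 in Hy.
  destruct (Phi_cf d (S n) ltac:(intros i Hi; apply Hd; lia) z ltac:(right; lra)) as [Hcx Hcc].
  fold y in Hcx, Hcc.
  exists y. split; [unfold eps in *; lra|]. split.
  { intros Hr. apply Hzi. rewrite <- Hcx. apply rat_cfx; auto. }
  exists j. split; [unfold j; lia|]. exists n. split; auto.
  assert (HB : Bq (cf_c y) n = Bq d n).
  { apply Bq_ext. intros i Hi. apply Hcc. lia. }
  pose proof (Bq_pos d n Hd) as Hpos.
  split.
  - unfold cf_q. rewrite Bq_qpair, Bq_S1, HB, HQ; auto.
  - assert (Ecc : cf_c y (S n) = Int_part z) by (unfold cf_c; f_equal; exact Hcx).
    unfold cf_q. rewrite Bq_qpair, Bq_S1, Bq_S2, HB, Ecc. destruct (Bq d n) as [c e]. simpl in *.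
    destruct (Int_part_spec z) as [I1 I2].
    assert (0 <= Int_part z)%Z by (apply le_IZR; lra).
    assert (HH : (Int_part z <= Int_part z * e + c)%Z) by nia.
    apply IZR_le in HH. lra.
Qed.


Lemma open_step (O : R -> Prop) : open_set O ->
  (forall a b, a < b -> exists z, a < z < b /\ O z) ->
  forall a b, a < b -> exists a' b', a < a' /\ a' < b' /\ b' < b /\ forall w, a' <= w <= b' -> O w.
Proof.
  intros Ho Hd a b Hab. destruct (Hd a b Hab) as [z [Hz Oz]].
  destruct (Ho z Oz) as [del Hdel].
  pose proof (cond_pos del) as Hp.
  set (rho := Rmin del (Rmin (z - a) (b - z)) / 2).
  pose proof (Rmin_l del (Rmin (z - a) (b - z))).
  pose proof (Rmin_r del (Rmin (z - a) (b - z))).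
  pose proof (Rmin_l (z - a) (b - z)). pose proof (Rmin_r (z - a) (b - z)).
  assert (0 < Rmin del (Rmin (z - a) (b - z))) by (repeat apply Rmin_glb_lt; lra).
  exists (z - rho), (z + rho). unfold rho. repeat split; try lra.
  intros w Hw. apply Hdel. unfold disc. apply Rabs_def1; lra.
Qed.

Lemma baire (G : nat -> R -> Prop) : (forall i, open_set (G i)) ->
  (forall i a b, a < b -> exists z, a < z < b /\ G i z) ->
  forall a b, a < b -> exists y, a < y < b /\ forall i, G i y.
Proof.
  intros Ho Hd a b Hab.
  assert (H : forall (i : nat) (p : R * R), exists p' : R * R, fst p < snd p ->
     fst p < fst p' /\ fst p' < snd p' /\ snd p' < snd p /\ forall w, fst p' <= w <= snd p' -> G i w).
  { intros i [u v]. simpl. destruct (Rlt_dec u v) as [Huv|Huv].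
    - destruct (open_step (G i) (Ho i) (Hd i) u v Huv) as [a' [b' Hh]].
      exists (a', b'). simpl. auto.
    - exists (0, 0). intros; contradiction. }
  set (F := fun i p => proj1_sig (constructive_indefinite_description _ (H i p))).
  assert (HF : forall i p, fst p < snd p -> fst p < fst (F i p) /\ fst (F i p) < snd (F i p) /\
     snd (F i p) < snd p /\ forall w, fst (F i p) <= w <= snd (F i p) -> G i w).
  { intros i p. unfold F. destruct (constructive_indefinite_description _ (H i p)); simpl; auto. }
  set (sq := fix sq (i : nat) : R * R := match i with O => (a, b) | S k => F k (sq k) end).
  assert (Hlt : forall i, fst (sq i) < snd (sq i)).
  { induction i; simpl; auto. destruct (HF i (sq i) IHi) as [_ [H2 _]]. auto. }
  assert (Hst : forall i, fst (sq i) < fst (sq (S i)) /\ snd (sq (S i)) < snd (sq i) /\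
     forall w, fst (sq (S i)) <= w <= snd (sq (S i)) -> G i w).
  { intros i. simpl. destruct (HF i (sq i) (Hlt i)) as [H1 [H2 [H3 H4]]]. auto. }
  assert (Hmono : forall i k, fst (sq i) <= fst (sq (i + k)%nat) /\ snd (sq (i + k)%nat) <= snd (sq i)).
  { intros i k. induction k.
    - rewrite Nat.add_0_r. lra.
    - rewrite Nat.add_succ_r. destruct (Hst (i + k)%nat) as [H1 [H2 _]]. lra. }
  assert (Hab' : forall i j, fst (sq i) <= snd (sq j)).
  { intros i j. destruct (Hmono i (j - i)%nat) as [A1 _]. destruct (Hmono j (i - j)%nat) as [_ B1].
    destruct (Nat.le_ge_cases i j).
    - replace (i + (j - i))%nat with j in A1 by lia. pose proof (Hlt j). lra.
    - replace (j + (i - j))%nat with i in B1 by lia. pose proof (Hlt i). lra. }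
  destruct (completeness (fun w => exists i, w = fst (sq i))) as [m [Hub Hlub]].
  { exists b. intros w [i ->]. specialize (Hab' i O). simpl in Hab'. auto. }
  { exists a. exists O. auto. }
  assert (Hm1 : forall i, fst (sq i) <= m) by (intros i; apply Hub; eauto).
  assert (Hm2 : forall j, m <= snd (sq j)).
  { intros j. apply Hlub. intros w [i ->]. auto. }
  exists m. split.
  - destruct (Hst O) as [H1 [H2 _]]. simpl in H1, H2. specialize (Hm1 1%nat). specialize (Hm2 1%nat).
    simpl in *. lra.
  - intros i. destruct (Hst i) as [_ [_ H3]]. apply H3. auto.
Qed.

Definition Ujg (l : nat -> nat) (T : nat -> nat -> R) (j : nat) (alpha : R) : Prop :=
  exists n, (1 <= n)%nat /\ (irrational alpha /\ cf_q alpha n = Z.of_nat (l j) /\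
    IZR (cf_q alpha (S n)) > T j n).
Definition Ug l T (alpha : R) : Prop :=
  forall M, (1 <= M)%nat -> exists j, (M <= j)%nat /\ Ujg l T j alpha.

Lemma Ucont l T j x : Ujg l T j x ->
  exists del, 0 < del /\ forall y, Rabs (y - x) < del -> irrational y -> Ujg l T j y.
Proof.
  intros [n [Hn [Hx [H1 H2]]]].
  destruct (cfc_locN x Hx (S (S n))) as [del [Hdel Hd]].
  exists del; split; auto. intros y Hy Hiy.
  exists n. split; auto. split; auto.
  assert (E1 : cf_qpair y n = cf_qpair x n) by (apply qpair_ext; intros k Hk; apply Hd; auto; lia).
  assert (E2 : cf_qpair y (S n) = cf_qpair x (S n)) by (apply qpair_ext; intros k Hk; apply Hd; auto; lia).
  unfold cf_q. rewrite E1, E2. auto.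
Qed.

Definition Wg l T (M : nat) (x : R) : Prop :=
  exists del, 0 < del /\ forall y, Rabs (y - x) < del -> irrational y ->
    exists j, (M <= j)%nat /\ Ujg l T j y.

Lemma W_open l T M : open_set (Wg l T M).
Proof.
  intros x [del [Hdel H]]. exists (mkposreal del Hdel). intros z Hz. unfold disc in Hz. simpl in Hz.
  exists (del - Rabs (z - x)). split; [lra|]. intros y Hy Hiy. apply H; auto.
  replace (y - x) with ((y - z) + (z - x)) by ring.
  pose proof (Rabs_triang (y - z) (z - x)). lra.
Qed.

Lemma neq_open r : open_set (fun x => x <> r).
Proof.
  intros x Hx. assert (0 < Rabs (x - r)) by (apply Rabs_pos_lt; lra).
  exists (mkposreal _ H). intros z Hz. unfold disc in Hz; simpl in Hz.
  intros ->. rewrite Rabs_minus_sym in Hz. lra.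
Qed.

Lemma and_open (A B : R -> Prop) : open_set A -> open_set B -> open_set (fun x => A x /\ B x).
Proof.
  intros HA HB x [Ax Bx]. destruct (HA x Ax) as [d1 H1]. destruct (HB x Bx) as [d2 H2].
  assert (0 < Rmin d1 d2) by (apply Rmin_glb_lt; apply cond_pos).
  exists (mkposreal _ H). intros z Hz. unfold disc in Hz; simpl in Hz.
  pose proof (Rmin_l d1 d2). pose proof (Rmin_r d1 d2).
  split; [apply H1 | apply H2]; unfold disc; lra.
Qed.

Definition enum (k : nat) : R :=
  let (u, v) := Cantor.of_nat k in
  let (a1, a2) := Cantor.of_nat u in let (b1, b2) := Cantor.of_nat v in
  IZR (Z.of_nat a1 - Z.of_nat a2) / IZR (Z.of_nat b1 - Z.of_nat b2).

Lemma enum_rat k : rat (enum k).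
Proof.
  unfold enum. destruct (Cantor.of_nat k) as [u v].
  destruct (Cantor.of_nat u) as [a1 a2]. destruct (Cantor.of_nat v) as [b1 b2].
  destruct (Z.eq_dec (Z.of_nat b1 - Z.of_nat b2) 0) as [E|E].
  - rewrite E. unfold Rdiv. rewrite Rinv_0, Rmult_0_r. apply (rat_int 0).
  - exists (Z.of_nat a1 - Z.of_nat a2)%Z, (Z.of_nat b1 - Z.of_nat b2)%Z; auto.
Qed.

Lemma enum_surj p q : exists k, enum k = IZR p / IZR q.
Proof.
  set (u := Cantor.to_nat (Z.to_nat p, Z.to_nat (- p))).
  set (v := Cantor.to_nat (Z.to_nat q, Z.to_nat (- q))).
  exists (Cantor.to_nat (u, v)). unfold enum. rewrite Cantor.cancel_of_to.
  unfold u, v. rewrite !Cantor.cancel_of_to. f_equal; f_equal; lia.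
Qed.

Theorem main_gen (l : nat -> nat) (T : nat -> nat -> R) :
  (forall k, (1 <= k)%nat -> (0 < l k)%nat) ->
  (forall k, (1 <= k)%nat -> (l k < l (S k))%nat) ->
  dense (Ug l T) /\ G_delta (Ug l T).
Proof.
  intros Hl0 Hl1.
  set (Og := fun i x => Wg l T (S (fst (Cantor.of_nat i))) x /\ x <> enum (snd (Cantor.of_nat i))).
  assert (Oopen : forall i, open_set (Og i)).
  { intros i. apply and_open; [apply W_open| apply neq_open]. }
  assert (Wdense : forall M a b, a < b -> exists z, a < z < b /\ Wg l T M z).
  { intros M a b Hab. destruct (core l T Hl0 Hl1 a b M Hab) as [y [Hy [Hiy [j [Hj HU]]]]].
    exists y. split; auto.
    assert (HU' : Ujg l T j y).
    { destruct HU as [n [Hn [A B]]]. exists n. auto. }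
    destruct (Ucont l T j y HU') as [del [Hdel Hd]].
    exists del. split; auto. intros y' Hy' Hi. exists j. auto. }
  assert (Odense : forall i a b, a < b -> exists z, a < z < b /\ Og i z).
  { intros i a b Hab. set (r := enum (snd (Cantor.of_nat i))).
    destruct (Rle_lt_dec r ((a + b) / 2)) as [Hr|Hr].
    - destruct (Wdense (S (fst (Cantor.of_nat i))) ((a + b) / 2) b ltac:(lra)) as [z [Hz Wz]].
      exists z. split; [lra|]. split; auto. fold r. lra.
    - destruct (Wdense (S (fst (Cantor.of_nat i))) a ((a + b) / 2) ltac:(lra)) as [z [Hz Wz]].
      exists z. split; [lra|]. split; auto. fold r. lra. }
  assert (Uiff : forall x, Ug l T x <-> forall i, Og i x).
  { intros x. split.
    - intros HU i.
      assert (Hx : irrational x).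
      { destruct (HU 1%nat ltac:(lia)) as [j [_ [n [_ [Hx _]]]]]. auto. }
      split.
      + destruct (HU (S (fst (Cantor.of_nat i))) ltac:(lia)) as [j [Hj Uj]].
        destruct (Ucont l T j x Uj) as [del [Hdel Hd]].
        exists del. split; auto. intros y Hy Hiy. exists j. auto.
      + intros E. apply Hx. rewrite E. apply enum_rat.
    - intros HO.
      assert (Hx : irrational x).
      { intros [p [q [Hq E]]]. destruct (enum_surj p q) as [k Hk].
        destruct (HO (Cantor.to_nat (O, k))) as [_ Hne].
        rewrite Cantor.cancel_of_to in Hne. simpl in Hne. apply Hne. rewrite Hk. auto. }
      intros M HM. destruct (HO (Cantor.to_nat (M - 1, O)%nat)) as [[del [Hdel Hd]] _].
      rewrite Cantor.cancel_of_to in Hd. simpl in Hd.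
      replace (S (M - 1)) with M in Hd by lia.
      apply Hd; auto. rewrite Rminus_diag, Rabs_R0; auto. }
  split.
  - intros x eps Heps.
    destruct (baire Og Oopen Odense (x - eps) (x + eps) ltac:(lra)) as [y [Hy HO]].
    exists y. split; [apply Uiff; auto|]. apply Rabs_def1; lra.
  - exists Og. split; auto.
Qed.


Theorem theorem6p3 (beta : R) (f : R -> R) (l eta : nat -> nat) :
  irrational beta ->
  periodic1 f -> real_analytic f -> ~ trig_poly f ->
  (forall k, (1 <= k)%nat -> (0 < l k)%nat) ->
  (forall k, (1 <= k)%nat -> (l k < l (S k))%nat) ->
  (forall k, (1 <= k)%nat -> fourier f (Z.of_nat (l k)) <> 0%C) ->
  (forall M : R, exists K : nat, forall k, (K <= k)%nat -> (1 <= k)%nat ->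
      Cmod (fourier f (Z.of_nat (l k))) > M * Tsum f (l k)) ->
  (* eta k = least n >= 1 with q'_n > 2 k^2 / |a_{l_k}|^2 *)
  (forall k, (1 <= k)%nat ->
     (1 <= eta k)%nat /\
     IZR (cf_q beta (eta k)) > 2 * INR k ^ 2 / Cmod (fourier f (Z.of_nat (l k))) ^ 2 /\
     (forall n, (1 <= n)%nat -> IZR (cf_q beta n) > 2 * INR k ^ 2 / Cmod (fourier f (Z.of_nat (l k))) ^ 2 ->
        (eta k <= n)%nat)) ->
  let V := fun (n m : nat) (alpha : R) =>
    irrational alpha /\ cf_q alpha n = Z.of_nat (l m) /\
    IZR (cf_q alpha (S n)) > 2 * IZR (cf_q beta (eta m)) * INR n ^ 2 in
  let Uj := fun (j : nat) (alpha : R) => exists n, (1 <= n)%nat /\ V n j alpha in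
  let U := fun alpha : R => forall M, (1 <= M)%nat -> exists j, (M <= j)%nat /\ Uj j alpha in
  dense U /\ G_delta U.
Proof.
  intros Hb Hp Ha Ht Hl0 Hl1 Hf HM Heta V Uj U.
  exact (main_gen l (fun j n => 2 * IZR (cf_q beta (eta j)) * INR n ^ 2) Hl0 Hl1).
Qed.
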